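(* Let $d\in\mathbb Z^+$, $c>0$, and let $\boldsymbol\beta=(\beta_j)_{j\ge1}$ and $(\Upsilon_{\boldsymbol\nu,\boldsymbol\lambda})_{\boldsymbol\nu\in\mathscr F,\boldsymbol\lambda\in\mathbb Z^d}$ be sequences of non-negative reals such that $\Upsilon_{\boldsymbol\nu,\boldsymbol 0}=\delta_{\boldsymbol\nu,\boldsymbol 0}$; $\Upsilon_{\boldsymbol\nu,\boldsymbol\lambda}=0$ if $|\boldsymbol\nu|<|\boldsymbol\lambda|$ or if $\boldsymbol\lambda$ has a negative entry; and otherwise, for all $j\ge1$, $$\Upsilon_{\boldsymbol\nu+\boldsymbol e_j,\boldsymbol\lambda}\le\beta_j\sum_{k=0}^{\nu_j}c^{k+1}\binom{\nu_j}{k}\sum_{\ell\in\{1,\dots,d\}:\lambda_\ell>0}\Upsilon_{\boldsymbol\nu-k\boldsymbol e_j,\boldsymbol\lambda-\boldsymbol e_\ell}.$$ Then for all $\boldsymbol\nu\in\mathscr F$ and $\boldsymbol\lambda\in\mathbb N_0^d$, $$\Upsilon_{\boldsymbol\nu,\boldsymbol\lambda}\le c^{|\boldsymbol\nu|}\frac{|\boldsymbol\lambda|!}{\boldsymbol\lambda!}\sum_{\boldsymbol m\le\boldsymbol\nu,\,|\boldsymbol m|=|\boldsymbol\lambda|}\boldsymbol\beta^{\boldsymbol m}\prod_{i\ge1}S(\nu_i,m_i).$$ If the recursive inequality is an equality, so is the conclusion.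
   Context: $\mathscr F$ is the set of finitely supported multi-indices in $\mathbb N_0^{\mathbb N}$; $|\boldsymbol\nu|=\sum\nu_j$, $\boldsymbol\lambda!=\prod\lambda_\ell!$, $\boldsymbol\beta^{\boldsymbol m}=\prod\beta_j^{m_j}$, componentwise order; $\boldsymbol e_j$ denotes a unit multi-index (in $\mathscr F$ or in $\mathbb Z^d$ as appropriate); $\delta$ is the Kronecker delta. $S(n,m)=\frac1{m!}\sum_{j=0}^m(-1)^{m-j}\binom mj j^n$ (Stirling numbers of the second kind, $S(0,0)=1$). *)

(* Defs.v *)
From mathcomp Require Import all_boot all_order all_algebra.
From mathcomp Require Import reals.
Set Implicit Arguments. Unset Strict Implicit. Unset Printing Implicit Defensive.
Import Order.TTheory GRing.Theory Num.Theory.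
Local Open Scope ring_scope.

(* Multi-indices in F are functions nat -> nat with finite support.
   Coordinates are indexed from 0 (paper: from 1). *)
Definition supp_lt (N : nat) (nu : nat -> nat) : Prop :=
  forall j, (N <= j)%N -> nu j = 0%N.

Definition nabs (N : nat) (nu : nat -> nat) : nat := (\sum_(j < N) nu j)%N.

Definition zabs (d : nat) (lam : 'I_d -> int) : int := \sum_(l < d) lam l.

Definition stir (R : realType) (n m : nat) : R :=
  (m`!%:R)^-1 * \sum_(j < m.+1) ((-1) ^+ (m - j) * 'C(m, j)%:R * (j%:R) ^+ n).

Definition addE (nu : nat -> nat) (j : nat) : nat -> nat :=
  fun i => (nu i + (i == j))%N.
Definition subkE (nu : nat -> nat) (k j : nat) : nat -> nat :=
  fun i => (nu i - (i == j) * k)%N.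
Definition zsubE (d : nat) (lam : 'I_d -> int) (l : 'I_d) : 'I_d -> int :=
  fun i => lam i - (i == l)%:Z.

Definition rec_rhs (R : realType) (d : nat) (c : R) (beta : nat -> R)
  (U : (nat -> nat) -> ('I_d -> int) -> R) (nu : nat -> nat)
  (lam : 'I_d -> int) (j : nat) : R :=
  beta j * \sum_(k < (nu j).+1)
     (c ^+ k.+1 * 'C(nu j, k)%:R *
      \sum_(l < d | (0 < lam l)%R) U (subkE nu k j) (zsubE lam l)).

Definition concl_rhs (R : realType) (d : nat) (c : R) (beta : nat -> R)
  (N : nat) (nu : nat -> nat) (lam : 'I_d -> nat) : R :=
  c ^+ (nabs N nu) *
  ((\sum_(l < d) lam l)%N`!%:R / (\prod_(l < d) (lam l)`!)%N%:R) *
  \sum_(m : {ffun 'I_N -> 'I_(nabs N nu).+1} |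
          [forall i, (m i <= nu i)%N] && ((\sum_(i < N) m i)%N == \sum_(l < d) lam l)%N)
     \prod_(i < N) (beta i ^+ m i * stir R (nu i) (m i)).

(* Main.v *)
Require Import Defs.
From mathcomp Require Import all_boot all_order all_algebra.
From mathcomp Require Import reals ring.
Import Order.TTheory GRing.Theory Num.Theory.
Local Open Scope ring_scope.
Set Implicit Arguments. Unset Strict Implicit. Unset Printing Implicit Defensive.

Lemma stir00 (R : realType) : stir R 0 0 = 1.
Proof. by rewrite /stir big_ord1 /= !expr0 invr1 !mul1r. Qed.

Lemma stirS0 (R : realType) n : stir R n.+1 0 = 0.
Proof. by rewrite /stir big_ord1 /= expr0n /= !mulr0. Qed.

Lemma stir0S (R : realType) m : stir R 0 m.+1 = 0.
Proof.
rewrite /stir; apply/eqP; rewrite mulf_eq0; apply/orP; right.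
have := exprDn (-1 : R) 1 m.+1.
rewrite addNr expr0n /= => H.
rewrite [X in _ == X]H; apply/eqP; apply: eq_bigr => j _.
by rewrite expr1n expr0 !mulr1 mulr_natr.
Qed.

Lemma stir_rec (R : realType) n m :
  stir R n.+1 m.+1 = \sum_(i < n.+1) 'C(n, i)%:R * stir R i m.
Proof.
rewrite /stir.
under [RHS]eq_bigr => i _ do rewrite mulrCA big_distrr /=.
rewrite -big_distrr /= exchange_big /=.
rewrite big_ord_recl /= expr0n /= mulr0 add0r.
rewrite factS natrM invfM -mulrA mulrCA; congr (_ * _).
rewrite big_distrr /=; apply: eq_bigr => j _.
rewrite /bump /= add1n subSS.
have -> : \sum_(i < n.+1) 'C(n, i)%:R * ((-1) ^+ (m - j) * 'C(m, j)%:R * j%:R ^+ i)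
   = (-1) ^+ (m - j) * 'C(m, j)%:R * (j.+1)%:R ^+ n :> R.
  rewrite -natr1 addrC exprDn big_distrr /=; apply: eq_bigr => i _.
  by rewrite expr1n mul1r mulr_natl -mulrnAr.
have H := mul_bin_diag m.+1 j; rewrite /= in H.
rewrite exprS.
have hm : (m.+1%:R : R) != 0 by rewrite pnatr_eq0.
have hj : (j.+1%:R : R) != 0 by rewrite pnatr_eq0.
have -> : 'C(m.+1, j.+1)%:R = (j.+1%:R)^-1 * (m.+1 * 'C(m, j))%:R :> R.
  by rewrite H natrM mulrA mulVf ?mul1r.
rewrite natrM.
field.
by rewrite !(addrC 1) !natr1 hm hj.
Qed.

Lemma stir_vanish (R : realType) n m : (n < m)%N -> stir R n m = 0.
Proof.
elim: n {-2}n (leqnn n) m => [|n IH] i hi m him.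
  move: hi; rewrite leqn0 => /eqP ->; case: m him => // m _; exact: stir0S.
case: m him => // m him.
case: i hi him => [|i] hi him; first exact: stir0S.
rewrite stir_rec big1 // => k _.
rewrite IH ?mulr0 //; first by rewrite -ltnS (leq_trans (ltn_ord k)).
exact: leq_trans (ltn_ord k) him.
Qed.

Lemma stir_rec_k (R : realType) a b :
  stir R a.+1 b.+1 = \sum_(k < a.+1) 'C(a, k)%:R * stir R (a - k) b.
Proof.
rewrite stir_rec (reindex_inj rev_ord_inj) /=; apply: eq_bigr => k _.
by rewrite subSS bin_sub // -ltnS.
Qed.

Lemma coef_sum_X (R : realType) M (f : nat -> R) n :
  (\sum_(b < M) f b *: 'X^b)`_n = if (n < M)%N then f n else 0.
Proof.
rewrite coef_sum.
rewrite (eq_bigr (fun b : 'I_M => if (b == n :> nat) then f b else 0)); last first.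
  by move=> b _; rewrite coefZ coefXn eq_sym; case: eqP => _; rewrite ?mulr1 ?mulr0.
rewrite -big_mkcond /= big_ord1_eq; case: ifP => //.
Qed.

Definition Qp (R : realType) (beta : nat -> R) (i a : nat) : {poly R} :=
  \sum_(b < a.+1) (beta i ^+ b * stir R a b) *: 'X^b.

Lemma coef_Qp (R : realType) beta i a b : (Qp beta i a)`_b = beta i ^+ b * stir R a b.
Proof.
rewrite /Qp (coef_sum_X _ (fun b => beta i ^+ b * stir R a b)); case: ltnP => // h.
by rewrite stir_vanish ?mulr0.
Qed.

Lemma Qp_rec (R : realType) (beta : nat -> R) i a :
  Qp beta i a.+1 = beta i *: ('X * \sum_(k < a.+1) 'C(a, k)%:R *: Qp beta i (a - k)).
Proof.
apply/polyP => b; rewrite coefZ coefXM coef_Qp.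
case: b => [|b] /=; first by rewrite stirS0 !mulr0.
rewrite coef_sum stir_rec_k big_distrr big_distrr /=.
apply: eq_bigr => k _; rewrite coefZ coef_Qp exprS; ring.
Qed.

Definition Pp (R : realType) (beta : nat -> R) (N : nat) (nu : nat -> nat) : {poly R} :=
  \prod_(i < N) Qp beta i (nu i).

Lemma Pp_rec (R : realType) (beta : nat -> R) N nu j : (j < N)%N ->
  Pp beta N (addE nu j) =
  beta j *: ('X * \sum_(k < (nu j).+1) 'C(nu j, k)%:R *: Pp beta N (subkE nu k j)).
Proof.
move=> hj; rewrite /Pp (bigD1 (Ordinal hj)) //=.
have Hr : forall f : nat -> nat, (forall i, i != j -> f i = nu i) ->
   \prod_(i < N | i != Ordinal hj) Qp beta i (f i) = \prod_(i < N | i != Ordinal hj) Qp beta i (nu i).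
  move=> f hf; apply: eq_bigr => i hi; rewrite hf //.
rewrite Hr; last by move=> i hi; rewrite /addE (negbTE hi) addn0.
rewrite /addE eqxx addn1 Qp_rec -scalerAl -mulrA big_distrl /=.
congr (_ *: (_ * _)); apply: eq_bigr => k _.
rewrite [in RHS](bigD1 (Ordinal hj)) // (Hr (subkE nu k j)); last by move=> i hi; rewrite /subkE (negbTE hi) mul0n subn0.
by rewrite /subkE eqxx mul1n -scalerAl.
Qed.

Lemma coef_Pp_rec0 (R : realType) (beta : nat -> R) N nu j : (j < N)%N ->
  (Pp beta N (addE nu j))`_0 = 0.
Proof. by move=> hj; rewrite Pp_rec // coefZ coefXM /= mulr0. Qed.

Lemma coef_Pp_recS (R : realType) (beta : nat -> R) N nu j n : (j < N)%N ->
  (Pp beta N (addE nu j))`_n.+1 =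
  beta j * \sum_(k < (nu j).+1) 'C(nu j, k)%:R * (Pp beta N (subkE nu k j))`_n.
Proof.
move=> hj; rewrite Pp_rec // coefZ coefXM /= coef_sum; congr (_ * _).
by apply: eq_bigr => k _; rewrite coefZ.
Qed.

Lemma Pp0 (R : realType) (beta : nat -> R) N : Pp beta N (fun _ => 0%N) = 1.
Proof.
rewrite /Pp big1 // => i _; rewrite /Qp big_ord1 /= stir00 expr0 mulr1 scale1r.
by rewrite expr0.
Qed.

From Stdlib Require Import FunctionalExtensionality.
From mathcomp Require Import zify.

Lemma nabs_addE N nu j : (j < N)%N -> nabs N (addE nu j) = (nabs N nu).+1.
Proof.
move=> hj; rewrite /nabs /addE big_split /= -addn1; congr (_ + _)%N.
rewrite (bigD1 (Ordinal hj)) //= eqxx big1 // => i hi.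
by case: eqP => // hij; case/eqP: hi; apply: val_inj.
Qed.

Lemma nabs_subkE N nu k j : (j < N)%N -> (k <= nu j)%N ->
  nabs N (subkE nu k j) = (nabs N nu - k)%N.
Proof.
move=> hj hk; rewrite /nabs (bigD1 (Ordinal hj)) //= [in RHS](bigD1 (Ordinal hj)) //=.
rewrite /subkE eqxx mul1n.
have -> : (\sum_(i < N | i != Ordinal hj) (nu i - ((i : nat) == j) * k))%N
   = (\sum_(i < N | i != Ordinal hj) nu i)%N.
  apply: eq_bigr => i hi; case: eqP => [hij|]; last by rewrite mul0n subn0.
  by case/eqP: hi; apply: val_inj.
exact: addnBAC.
Qed.

Lemma supp_addE N nu j : (j < N)%N -> supp_lt N nu -> supp_lt N (addE nu j).
Proof.
move=> hj hs i hi; rewrite /addE hs //; case: eqP => // hij; subst; lia.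
Qed.

Lemma supp_subkE N nu k j : supp_lt N nu -> supp_lt N (subkE nu k j).
Proof. by move=> hs i hi; rewrite /subkE hs. Qed.

Lemma decomp N nu n : supp_lt N nu -> nabs N nu = n.+1 ->
  exists j, [/\ (j < N)%N, (0 < nu j)%N, nu = addE (subkE nu 1 j) j &
                nabs N (subkE nu 1 j) = n].
Proof.
move=> hs hn.
have : (\sum_(i < N) nu i != 0)%N by rewrite -/(nabs N nu) hn.
rewrite sum_nat_eq0 => /forallPn [i] /= hi.
have hpos : (0 < nu i)%N by rewrite lt0n.
exists i; split => //.
  apply: functional_extensionality => x; rewrite /addE /subkE.
  case: eqP => [->|_]; last by rewrite mul0n subn0 addn0.
  by rewrite mul1n addn1 subn1 prednK.
by rewrite nabs_subkE // hn subn1.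
Qed.

Lemma supp_zero N nu : supp_lt N nu -> nabs N nu = 0%N -> nu = (fun _ => 0%N).
Proof.
move=> hs hn; apply: functional_extensionality => x.
case: (ltnP x N) => hx; last exact: hs.
have : (\sum_(i < N) nu i == 0)%N by rewrite -/(nabs N nu) hn.
by rewrite sum_nat_eq0 => /forallP/(_ (Ordinal hx))/eqP.
Qed.

Lemma Pp_deg (R : realType) (beta : nat -> R) N n : forall nu, supp_lt N nu -> nabs N nu = n ->
  forall s, (n < s)%N -> (Pp beta N nu)`_s = 0.
Proof.
elim/ltn_ind: n => n IH nu hs hn s hns.
case: n IH hn hns => [|n] IH hn hns.
  by rewrite (supp_zero hs hn) Pp0 coefC; case: s hns.
have [j [hj hp hnu hn']] := decomp hs hn.
case: s hns => // s hns.
rewrite hnu coef_Pp_recS // big1 ?mulr0 // => -[k hk] _ /=.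
rewrite (IH (n - k)%N) ?mulr0 //.
- lia.
- by do 2 apply: supp_subkE.
- rewrite nabs_subkE ?hn' //.
  move: hk; rewrite /subkE eqxx mul1n; lia.
Qed.


Lemma prod_scaleX (R : realType) N (a : 'I_N -> R) (e : 'I_N -> nat) :
  \prod_(i < N) (a i *: 'X^(e i)) = (\prod_(i < N) a i) *: 'X^(\sum_(i < N) e i).
Proof.
under eq_bigr => i _ do rewrite -mul_polyC.
by rewrite big_split /= prodrXr -rmorph_prod mul_polyC.
Qed.

Lemma ffun_coef (R : realType) (beta : nat -> R) N nu s :
  \sum_(m : {ffun 'I_N -> 'I_(nabs N nu).+1} |
          [forall i, (m i <= nu i)%N] && ((\sum_(i < N) m i)%N == s))
     \prod_(i < N) (beta i ^+ m i * stir R (nu i) (m i)) = (Pp beta N nu)`_s.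
Proof.
have hQ : forall i : 'I_N, Qp beta i (nu i) =
   \sum_(b < (nabs N nu).+1) (beta i ^+ b * stir R (nu i) b) *: 'X^b.
  move=> i; apply/polyP => n.
  rewrite coef_Qp (coef_sum_X _ (fun b => beta i ^+ b * stir R (nu i) b)).
  case: ltnP => // h; rewrite stir_vanish ?mulr0 //.
  have : (nu i <= nabs N nu)%N by rewrite /nabs (bigD1 i) //= leq_addr.
  lia.
rewrite /Pp (eq_bigr _ (fun i _ => hQ i)) bigA_distr_bigA /= coef_sum.
rewrite big_mkcond /=; apply: eq_bigr => m _.
rewrite prod_scaleX coefZ coefXn.
case: (boolP [forall i, (m i <= nu i)%N]) => hf /=.
  by rewrite eq_sym; case: eqP; rewrite ?mulr1 ?mulr0.
case: eqP; rewrite ?mulr0 // => _.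
move/forallPn: hf => [i hi]; rewrite -ltnNge in hi.
by rewrite (bigD1 i) //= stir_vanish // mulr0 !mul0r.
Qed.

Definition mult (R : realType) d (lam : 'I_d -> nat) : R :=
  (\sum_(l < d) lam l)%N`!%:R / (\prod_(l < d) (lam l)`!)%N%:R.

Lemma concl_eq (R : realType) d (c : R) beta N nu (lam : 'I_d -> nat) :
  concl_rhs c beta N nu lam = c ^+ nabs N nu * mult R lam * (Pp beta N nu)`_(\sum_(l < d) lam l)%N.
Proof. by rewrite /concl_rhs ffun_coef. Qed.

Lemma mult_rec (R : realType) d (lam : 'I_d -> nat) s : (\sum_(l < d) lam l)%N = s.+1 ->
  mult R lam = \sum_(l < d | (0 < lam l)%N) mult R (fun i => (lam i - (i == l))%N).
Proof.
move=> hs.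
have hP : forall l, (0 < lam l)%N ->
   ((\prod_(i < d) (lam i - (i == l))`!) * lam l = \prod_(i < d) (lam i)`!)%N.
  move=> l hl; rewrite (bigD1 l) //= [in RHS](bigD1 l) //= eqxx subn1.
  have -> : (\prod_(i < d | i != l) (lam i - (i == l))`!)%N = (\prod_(i < d | i != l) (lam i)`!)%N.
    by apply: eq_bigr => i hi; rewrite (negbTE hi) subn0.
  rewrite mulnAC; congr (_ * _)%N.
  by case: (lam l) hl => // a _ /=; rewrite factS mulnC.
have hS : forall l, (0 < lam l)%N -> (\sum_(i < d) (lam i - (i == l)))%N = s.
  move=> l hl; have hs' := hs; rewrite (bigD1 l) //= in hs'; rewrite (bigD1 l) //= eqxx; move: hs'.
  have -> : (\sum_(i < d | i != l) (lam i - (i == l)))%N = (\sum_(i < d | i != l) lam i)%N.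
    by apply: eq_bigr => i hi; rewrite (negbTE hi) subn0.
  move: hl; set a := lam l; set b := (\sum_(i < d | i != l) lam i)%N; lia.
have hPz : ((\prod_(i < d) (lam i)`!)%N%:R : R) != 0.
  by rewrite pnatr_eq0 -lt0n; apply: prodn_gt0 => i; exact: fact_gt0.
rewrite /mult hs.
rewrite (eq_bigr (fun l => s`!%:R * (lam l)%:R / (\prod_(i < d) (lam i)`!)%N%:R)); last first.
  move=> l hl; rewrite hS // -(hP l hl) natrM.
  have hl' : ((lam l)%:R : R) != 0 by rewrite pnatr_eq0 -lt0n.
  have hP' : ((\prod_(i < d) (lam i - (i == l))`!)%N%:R : R) != 0.
    by rewrite pnatr_eq0 -lt0n; apply: prodn_gt0 => i; exact: fact_gt0.
  by field; rewrite hl' hP'.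
rewrite -big_distrl -big_distrr /= -natr_sum.
have -> : (\sum_(i < d | (0 < lam i)%N) lam i)%N = s.+1.
  rewrite -hs [in RHS](bigID (fun i => (0 < lam i)%N)) /= [X in _ = (_ + X)%N]big1 ?addn0 //.
  by move=> i; rewrite lt0n negbK => /eqP.
by rewrite factS natrM (mulrC s.+1%:R).
Qed.


Lemma zsubE_nat d (lam : 'I_d -> nat) l : (0 < lam l)%N ->
  zsubE (fun i => (lam i)%:Z) l = (fun i => (lam i - (i == l))%N%:Z).
Proof.
move=> hl; apply: functional_extensionality => i; rewrite /zsubE subzn //.
by case: eqP => // ->.
Qed.

Lemma sum_subl d (lam : 'I_d -> nat) l : (0 < lam l)%N ->
  (\sum_(i < d) (lam i - (i == l)))%N = (\sum_(i < d) lam i).-1.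
Proof.
move=> hl; rewrite (bigD1 l) //= [in RHS](bigD1 l) //= eqxx.
have -> : (\sum_(i < d | i != l) (lam i - (i == l)))%N = (\sum_(i < d | i != l) lam i)%N.
  by apply: eq_bigr => i hi; rewrite (negbTE hi) subn0.
move: hl; set a := lam l; set b := (\sum_(i < d | i != l) lam i)%N; lia.
Qed.

Lemma nu_le_nabs N nu j : (j < N)%N -> (nu j <= nabs N nu)%N.
Proof. by move=> hj; rewrite /nabs (bigD1 (Ordinal hj)) //= leq_addr. Qed.

Lemma key (R : realType) d (c : R) beta N nu1 j (lam : 'I_d -> nat) n' s' :
  (j < N)%N -> nabs N nu1 = n' -> (\sum_(l < d) lam l)%N = s'.+1 ->
  rec_rhs c beta (fun mu lz => concl_rhs c beta N mu (fun l => absz (lz l)))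
     nu1 (fun l => (lam l)%:Z) j = concl_rhs c beta N (addE nu1 j) lam.
Proof.
move=> hj hn hs.
rewrite /rec_rhs concl_eq nabs_addE // hn hs coef_Pp_recS //.
have inner : forall k : 'I_(nu1 j).+1,
   \sum_(l < d | (0 < (fun l => (lam l)%:Z) l)%R)
      concl_rhs c beta N (subkE nu1 k j) (fun l0 => absz (zsubE (fun l => (lam l)%:Z) l l0))
   = c ^+ (n' - k) * (Pp beta N (subkE nu1 k j))`_s' * mult R lam.
  move=> k.
  have hk : (k <= nu1 j)%N by rewrite -ltnS ltn_ord.
  rewrite (mult_rec R hs) big_distrr /=.
  apply: eq_big => [l|l hl]; first by rewrite ltz_nat.
  rewrite ltz_nat in hl.
  rewrite (zsubE_nat hl) /= concl_eq nabs_subkE // hn sum_subl // hs /=.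
  by rewrite mulrAC.
under eq_bigr => k _ do rewrite inner.
rewrite big_distrr /= [in RHS]mulrA -mulrA [in RHS]big_distrr /=.
have hn' : (nu1 j <= n')%N by rewrite -hn nu_le_nabs.
rewrite big_distrr /=; apply: eq_bigr => k _.
have hk : (k <= n')%N by apply: leq_trans hn'; rewrite -ltnS ltn_ord.
have -> : c ^+ n'.+1 = c ^+ k.+1 * c ^+ (n' - k).
  by rewrite -exprD; congr (_ ^+ _); lia.
ring.
Qed.


Lemma zabs_nat d (lam : 'I_d -> nat) : zabs (fun l => (lam l)%:Z) = (\sum_(l < d) lam l)%N%:Z.
Proof. by rewrite /zabs (big_morph Posz PoszD (erefl 0%Z)). Qed.

Lemma main_gen (R : realType) d (c : R) (beta : nat -> R)
  (U : (nat -> nat) -> ('I_d -> int) -> R) N (r : R -> R -> Prop)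
  (r_refl : forall x, r x x) (r_trans : forall x y z, r x y -> r y z -> r x z)
  (hU0 : U (fun _ => 0%N) (fun _ => 0%Z) = 1)
  (hUnu0 : forall nu, supp_lt N nu -> (exists j, nu j <> 0%N) -> U nu (fun _ => 0%Z) = 0)
  (hvan : forall nu lam, supp_lt N nu -> ((nabs N nu)%:Z < zabs lam)%R -> U nu lam = 0)
  (hrec : forall nu (lam : 'I_d -> int) j, supp_lt N nu ->
      (forall l, (0 <= lam l)%R) -> (exists l, lam l <> 0%Z) ->
      (zabs lam <= (nabs N nu).+1%:Z)%R ->
      r (U (addE nu j) lam) (rec_rhs c beta U nu lam j))
  (rmono : forall nu (lam : 'I_d -> int) j (V : (nat -> nat) -> ('I_d -> int) -> R),
     (forall k l, (k < (nu j).+1)%N -> (0 < lam l)%R ->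
        r (U (subkE nu k j) (zsubE lam l)) (V (subkE nu k j) (zsubE lam l))) ->
     r (rec_rhs c beta U nu lam j) (rec_rhs c beta V nu lam j)) :
  forall nu (lam : 'I_d -> nat), supp_lt N nu ->
    r (U nu (fun l => (lam l)%:Z)) (concl_rhs c beta N nu lam).
Proof.
move=> nu lam hs.
move: {2}(nabs N nu) (erefl (nabs N nu)) => n hn.
elim/ltn_ind: n nu lam hs hn => n IH nu lam hs hn.
case: (boolP [forall l, lam l == 0%N]) => hz.
  have hl0 : lam = (fun _ => 0%N).
    by apply: functional_extensionality => l; apply/eqP; move/forallP: hz.
  subst lam.
  case: n IH hn => [|n] IH hn.
    move: (supp_zero hs hn) => e; subst nu; rewrite hU0.
    suff -> : concl_rhs c beta N (fun _ => 0%N) (fun _ : 'I_d => 0%N) = 1 by [].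
    rewrite concl_eq Pp0 coefC hn /mult big1 // big1 //=.
    by rewrite expr0 /= !mul1r mulr1 invr1.
  have [j [hj hp hnu hn']] := decomp hs hn.
  rewrite hUnu0 //; last by exists j => h; rewrite h in hp.
  suff -> : concl_rhs c beta N nu (fun _ : 'I_d => 0%N) = 0 by [].
  by rewrite concl_eq big1 // hnu coef_Pp_rec0 // mulr0.
have [s hs'] : exists s, (\sum_(l < d) lam l)%N = s.+1.
  move/forallPn: hz => [l hl]; exists (\sum_(l < d) lam l).-1; rewrite prednK //.
  by rewrite (bigD1 l) //= ltn_addr // lt0n.
case: (ltnP n (\sum_(l < d) lam l)) => hlt.
  rewrite hvan //; last by rewrite zabs_nat hn ltz_nat.
  suff -> : concl_rhs c beta N nu lam = 0 by [].
  by rewrite concl_eq (@Pp_deg R beta N n nu hs hn _ hlt) mulr0.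
case: n IH hn hlt => [|n] IH hn hlt.
  by rewrite hs' in hlt.
have [j [hj hp hnu hn']] := decomp hs hn.
rewrite hnu.
set nu1 := subkE nu 1 j.
have hs1 : supp_lt N nu1 by apply: supp_subkE.
refine (r_trans _ _ _ (hrec nu1 (fun l => (lam l)%:Z) j hs1 _ _ _) _).
- by [].
- move/forallPn: hz => [l hl]; exists l => h; case: h => h; by rewrite h in hl.
- by rewrite zabs_nat hn' lez_nat.
refine (r_trans _ _ _ (rmono nu1 _ j (fun mu lz => concl_rhs c beta N mu (fun l => absz (lz l))) _) _).
  move=> k l hk hl; rewrite ltz_nat in hl.
  rewrite (zsubE_nat hl).
  have hk' : (k <= nu1 j)%N by rewrite -ltnS.
  apply: (IH (n - k)%N).
  + lia.
  + exact: supp_subkE.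
  + by rewrite nabs_subkE // hn'.
rewrite (@key R d c beta N nu1 j lam n s hj hn' hs'); exact: r_refl.
Qed.


Lemma mono_le (R : realType) d (c : R) (beta : nat -> R) (U : (nat -> nat) -> ('I_d -> int) -> R)
  (hc : 0 < c) (hb : forall j, 0 <= beta j) :
  forall nu (lam : 'I_d -> int) j (V : (nat -> nat) -> ('I_d -> int) -> R),
     (forall k l, (k < (nu j).+1)%N -> (0 < lam l)%R ->
        U (subkE nu k j) (zsubE lam l) <= V (subkE nu k j) (zsubE lam l)) ->
     rec_rhs c beta U nu lam j <= rec_rhs c beta V nu lam j.
Proof.
move=> nu lam j V H; rewrite /rec_rhs; apply: ler_wpM2l => //.
apply: ler_sum => k _; apply: ler_wpM2l.
  by rewrite mulr_ge0 // exprn_ge0 // ltW.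
by apply: ler_sum => l hl; apply: H.
Qed.

Lemma mono_eq (R : realType) d (c : R) (beta : nat -> R) (U : (nat -> nat) -> ('I_d -> int) -> R) :
  forall nu (lam : 'I_d -> int) j (V : (nat -> nat) -> ('I_d -> int) -> R),
     (forall k l, (k < (nu j).+1)%N -> (0 < lam l)%R ->
        U (subkE nu k j) (zsubE lam l) = V (subkE nu k j) (zsubE lam l)) ->
     rec_rhs c beta U nu lam j = rec_rhs c beta V nu lam j.
Proof.
move=> nu lam j V H; rewrite /rec_rhs; congr (_ * _).
apply: eq_bigr => k _; congr (_ * _).
by apply: eq_bigr => l hl; apply: H.
Qed.

Unset Implicit Arguments.

Theorem lemmaA4 (R : realType) (d : nat) (c : R) (beta : nat -> R)
  (U : (nat -> nat) -> ('I_d -> int) -> R) :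
  (0 < d)%N -> 0 < c ->
  (forall j, 0 <= beta j) ->
  (forall N nu lam, supp_lt N nu -> 0 <= U nu lam) ->
  (* Upsilon_{nu,0} = delta_{nu,0} *)
  U (fun _ => 0%N) (fun _ => 0%Z) = 1 ->
  (forall N nu, supp_lt N nu -> (exists j, nu j <> 0%N) -> U nu (fun _ => 0%Z) = 0) ->
  (* vanishing conditions *)
  (forall N nu lam, supp_lt N nu -> ((nabs N nu)%:Z < zabs lam)%R -> U nu lam = 0) ->
  (forall N nu lam, supp_lt N nu -> (exists l, (lam l < 0)%R) -> U nu lam = 0) ->
  ((* the recursive inequality, in the remaining cases *)
   (forall N nu (lam : 'I_d -> int) j, supp_lt N nu ->
      (forall l, (0 <= lam l)%R) -> (exists l, lam l <> 0%Z) ->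
      (zabs lam <= (nabs N nu).+1%:Z)%R ->
      U (addE nu j) lam <= rec_rhs c beta U nu lam j) ->
   forall N nu (lam : 'I_d -> nat), supp_lt N nu ->
      U nu (fun l => (lam l)%:Z) <= concl_rhs c beta N nu lam)
  /\
  ((* the equality case *)
   (forall N nu (lam : 'I_d -> int) j, supp_lt N nu ->
      (forall l, (0 <= lam l)%R) -> (exists l, lam l <> 0%Z) ->
      (zabs lam <= (nabs N nu).+1%:Z)%R ->
      U (addE nu j) lam = rec_rhs c beta U nu lam j) ->
   forall N nu (lam : 'I_d -> nat), supp_lt N nu ->
      U nu (fun l => (lam l)%:Z) = concl_rhs c beta N nu lam).
Proof.
move=> hd hc hb hpos hU0 hUnu0 hvan hneg; split => hrec N nu lam hs.
  apply: (@main_gen R d c beta U N (fun x y => x <= y)) => //.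
  - by move=> x y z; apply: le_trans.
  - by move=> nu' hs'; apply: hUnu0 hs'.
  - by move=> nu' lam' hs'; apply: hvan hs'.
  - by move=> nu' lam' j hs'; apply: hrec hs'.
  - exact: mono_le.
apply: (@main_gen R d c beta U N (fun x y => x = y)) => //.
- by move=> x y z ->.
- by move=> nu' hs'; apply: hUnu0 hs'.
- by move=> nu' lam' hs'; apply: hvan hs'.
- by move=> nu' lam' j hs'; apply: hrec hs'.
- exact: mono_eq.
Qed.
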